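(* Every closed quantifier $Q\subseteq 2^{\mathbb{N}^k}$ has a unique support, i.e. there is a unique $\subseteq$-minimal set $S\subseteq\mathbb{N}^k$ supporting $Q$.
   Context: A quantifier of type $\langle k\rangle$ on $\mathbb{N}$ is a family $Q$ of subsets of $\mathbb{N}^k$, identified with a subset of $2^{\mathbb{N}^k}$ (product topology). A set $S\subseteq\mathbb{N}^k$ supports $Q$ if for all $A,B\subseteq\mathbb{N}^k$ with $A\cap S=B\cap S$ we have $A\in Q\iff B\in Q$. A support of $Q$ is a minimal (under inclusion) set supporting $Q$. *)

(* Defs.v *)
From mathcomp Require Import all_boot.
Set Implicit Arguments. Unset Strict Implicit. Unset Printing Implicit Defensive.

Definition point (k : nat) := k.-tuple nat.
Definition subset_Nk (k : nat) := point k -> bool.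

Definition quantifier (k : nat) := subset_Nk k -> Prop.

(* Closedness in the product topology on 2^(N^k): the complement is open,
   i.e. every A outside Q has a basic (cylinder) neighbourhood, determined by
   finitely many coordinates F, disjoint from Q. *)
Definition is_open_set (k : nat) (U : quantifier k) : Prop :=
  forall A : subset_Nk k, U A ->
    exists F : seq (point k),
      forall B : subset_Nk k, (forall x, x \in F -> B x = A x) -> U B.

Definition is_closed (k : nat) (Q : quantifier k) : Prop :=
  is_open_set (fun A => ~ Q A).

Definition supports (k : nat) (Q : quantifier k) (S : subset_Nk k) : Prop :=
  forall A B : subset_Nk k, (forall x, S x -> A x = B x) -> (Q A <-> Q B).

Definition is_support (k : nat) (Q : quantifier k) (S : subset_Nk k) : Prop :=
  supports Q S /\
  forall S' : subset_Nk k, supports Q S' ->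
    (forall x, S' x -> S x) -> (forall x, S x -> S' x).

(* Main.v *)
Require Import Defs.
From mathcomp Require Import all_boot.
From Stdlib Require Import Classical ClassicalEpsilon FunctionalExtensionality.
Set Implicit Arguments. Unset Strict Implicit.

Definition flip (k : nat) (x : point k) (A : subset_Nk k) : subset_Nk k :=
  fun y => if y == x then ~~ A y else A y.

Definition ess (k : nat) (Q : quantifier k) (x : point k) : Prop :=
  exists A, Q A /\ ~ Q (@flip k x A).

Definition S0 (k : nat) (Q : quantifier k) : subset_Nk k :=
  fun x => if excluded_middle_informative (ess Q x) then true else false.

Lemma S0P k (Q : quantifier k) x : S0 Q x <-> ess Q x.
Proof.
rewrite /S0; case: excluded_middle_informative => h; split => //.
Qed.

Lemma nessP k (Q : quantifier k) x : ~ S0 Q x -> forall A, Q A -> Q (flip x A).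
Proof.
move=> h A QA; apply: NNPP => nq; apply: h; apply/S0P; by exists A.
Qed.

Lemma sub_S0 k (Q : quantifier k) S : supports Q S -> forall x, S0 Q x -> S x.
Proof.
move=> sup x /S0P [A [QA nQ]]; apply: NNPP => nS; apply: nQ.
apply/(sup A) => // y Sy; rewrite /flip; case: eqP => // e; subst y; by rewrite Sy in nS.
Qed.

Lemma move_lemma k (Q : quantifier k) (g : subset_Nk k) (L : seq (point k)) :
  (forall x, x \in L -> ~ S0 Q x) ->
  forall D, Q D -> Q (fun y => if y \in L then g y else D y).
Proof.
elim: L => [|x L IH] hL D QD.
  by have -> : (fun y : point k => if y \in [::] then g y else D y) = D by [].
set D' := (fun y => if y \in L then g y else D y).
have QD' : Q D' by apply: IH => // z zL; apply: hL; rewrite inE zL orbT.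
have nx : ~ S0 Q x by apply: hL; rewrite inE eqxx.
case: (boolP (g x == D' x)) => hg.
  have -> : (fun y => if y \in x :: L then g y else D y) = D' => //.
  apply: functional_extensionality => y; rewrite inE.
  case: eqP => [->|_] //=; exact/eqP.
have -> : (fun y => if y \in x :: L then g y else D y) = flip x D'.
  apply: functional_extensionality => y; rewrite /flip inE.
  case: eqP => [->|_] //=.
  by move: hg; case: (g x); case: (D' x).
exact: nessP.
Qed.

Lemma S0_supports k (Q : quantifier k) : is_closed Q -> supports Q (S0 Q).
Proof.
move=> cl.
suff H : forall A B, (forall x, S0 Q x -> A x = B x) -> Q A -> Q B.
  move=> A B h; split; first exact: H.
  by apply: H => x /h ->.
move=> A B h QA; apply: NNPP => nQB.
have [F HF] := cl B nQB.
pose L := filter (fun y => ~~ S0 Q y) F.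
have QC := @move_lemma k Q B L _ A QA.
apply: (HF (fun y => if y \in L then B y else A y)); last first.
  apply: QC => x; rewrite mem_filter => /andP [/negP ? _] //.
move=> x xF; rewrite mem_filter xF andbT.
case: (boolP (S0 Q x)) => //= s; by rewrite h.
Qed.

Theorem lemma16 (k : nat) (Q : quantifier k) :
  is_closed Q -> exists! S : subset_Nk k, is_support Q S.
Proof.
move=> cl; exists (S0 Q); split.
  split; first exact: S0_supports.
  move=> S' sup _; exact: sub_S0.
move=> S [supS minS].
have h1 := sub_S0 supS.
have h2 := minS _ (S0_supports cl) h1.
apply: functional_extensionality => x.
apply/idP/idP; [exact: h1 | exact: h2].
Qed.
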